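(* Let $\mathbf{Q}=(Q,Z,\cdot)$ be a finite automaton, $q\in Q$ and $a\in Z$. If the identity $\Gamma(\mathbf{Q},q)$ holds in a Conway category $\mathcal{C}$, then so does the identity $\Gamma(\mathbf{Q},qa)$.
   Context: Cartesian categories have chosen finite products (terminal object $T$, projections $\pi_i$, tupling $\langle\cdot\rangle$, $!_A:A\to T$, $f\times g$), strictly associative; composition is written $g\circ f$; $\Delta_{A^n}=\langle 1_A,\ldots,1_A\rangle:A\to A^n$. A dagger operation maps $f:A\times C\to A$ to $f^\dagger:C\to A$. A Conway category is a cartesian category with dagger satisfying: $(f\circ(1_A\times g))^\dagger=f^\dagger\circ g$ ($f:A\times B\to A$, $g:C\to B$); $f^{\dagger\dagger}=(f\circ(\Delta_{A^2}\times 1_C))^\dagger$ ($f:A\times A\times C\to A$); $(f\circ\langle g,\pi_2^{A\times C}\rangle)^\dagger=f\circ\langle (g\circ\langle f,\pi_2^{B\times C}\rangle)^\dagger,1_C\rangle$ ($f:B\times C\to A$, $g:A\times C\to B$). A finite automaton $\mathbf{Q}=(Q,Z,\cdot)$ has finite nonempty state set $Q$, finite nonempty input alphabet $Z$ and action $Q\times Z\to Q$, written $qa=q\cdot a$. Write $Q=\{q_1,\ldots,q_n\}$, identified with $\{1,\ldots,n\}$, and $Z=\{a_1,\ldots,a_m\}$. For an object $A$ and $i\in[n]$ let $\rho_i^{\mathbf{Q},A}=\langle\pi^{A^n}_{ia_1},\ldots,\pi^{A^n}_{ia_m}\rangle:A^n\to A^m$ ($ia_j$ is the index of $q_i\cdot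 a_j$). For $f:A^m\times C\to A$ let $f^{\mathbf{Q},A}:A^n\times C\to A^n$ have components $\pi_i^{A^n}\circ f^{\mathbf{Q},A}=f\circ(\rho_i^{\mathbf{Q},A}\times 1_C)$. For a state $q_i$, the identity $\Gamma(\mathbf{Q},q_i)$ holds in $\mathcal{C}$ if $\pi_i^{A^n}\circ(f^{\mathbf{Q},A})^\dagger=(f\circ(\Delta_{A^m}\times 1_C))^\dagger$ for all objects $A,C$ and all $f:A^m\times C\to A$. *)

(* Defs.v *)
From mathcomp Require Import all_boot.
Set Implicit Arguments.
Unset Strict Implicit.
Unset Printing Implicit Defensive.

Record CartCat := {
  ob : Type;
  hom : ob -> ob -> Type;
  idm : forall A, hom A A;
  comp : forall A B C, hom B C -> hom A B -> hom A C;   (* comp g f = g o f *)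
  comp_idl : forall A B (f : hom A B), comp (idm B) f = f;
  comp_idr : forall A B (f : hom A B), comp f (idm A) = f;
  comp_assoc : forall A B C D (h : hom C D) (g : hom B C) (f : hom A B),
      comp h (comp g f) = comp (comp h g) f;
  term : ob;
  bang : forall A, hom A term;
  bang_uniq : forall A (f : hom A term), f = bang A;
  prod : ob -> ob -> ob;
  pi1 : forall A B, hom (prod A B) A;
  pi2 : forall A B, hom (prod A B) B;
  pair : forall C A B, hom C A -> hom C B -> hom C (prod A B);
  pi1_pair : forall C A B (f : hom C A) (g : hom C B), comp (pi1 A B) (pair f g) = f;
  pi2_pair : forall C A B (f : hom C A) (g : hom C B), comp (pi2 A B) (pair f g) = g;
  pair_eta : forall C A B (h : hom C (prod A B)),
      pair (comp (pi1 A B) h) (comp (pi2 A B) h) = h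
}.

Arguments idm {c} A.
Arguments comp {c A B C}.
Arguments bang {c} A.
Arguments pi1 {c} A B.
Arguments pi2 {c} A B.
Arguments pair {c C A B}.

Section Derived.
Variable X : CartCat.

Definition pmap (A B A' B' : ob X) (f : hom A A') (g : hom B B') :
    hom (prod A B) (prod A' B') :=
  pair (comp f (pi1 A B)) (comp g (pi2 A B)).

Definition assoc (A B C : ob X) : hom (prod (prod A B) C) (prod A (prod B C)) :=
  pair (comp (pi1 A B) (pi1 _ C))
       (pair (comp (pi2 A B) (pi1 _ C)) (pi2 _ C)).

(* powS A k = A^(k+1), right-nested: A^1 = A, A^(k+2) = A x A^(k+1) *)
Fixpoint powS (A : ob X) (k : nat) : ob X :=
  match k with 0 => A | k'.+1 => prod A (powS A k') end.

(* the i-th projection A^(k+1) -> A (indices from 0; only used for i <= k) *)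
Fixpoint projS (A : ob X) (k : nat) (i : nat) : hom (powS A k) A :=
  match k return hom (powS A k) A with
  | 0 => idm A
  | k'.+1 => match i with
             | 0 => pi1 A (powS A k')
             | j.+1 => comp (projS A k' j) (pi2 A (powS A k'))
             end
  end.

Fixpoint tupS (C A : ob X) (k : nat) (fs : nat -> hom C A) : hom C (powS A k) :=
  match k return hom C (powS A k) with
  | 0 => fs 0
  | k'.+1 => pair (fs 0) (tupS k' (fun j => fs j.+1))
  end.

Definition diagS (A : ob X) (k : nat) : hom A (powS A k) :=
  tupS k (fun _ => idm A).

End Derived.

Record ConwayCat := {
  ccat :> CartCat;
  dagger : forall (A C : ob ccat), hom (prod A C) A -> hom C A;
  conway_param : forall (A B C : ob ccat) (f : hom (prod A B) A) (g : hom C B),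
      dagger (comp f (pmap (idm A) g)) = comp (dagger f) g;
  conway_double : forall (A C : ob ccat) (f : hom (prod A (prod A C)) A),
      dagger (dagger f) =
      dagger (comp f (comp (assoc A A C) (pmap (diagS A 1) (idm C))));
  conway_comp : forall (A B C : ob ccat) (f : hom (prod B C) A) (g : hom (prod A C) B),
      dagger (comp f (pair g (pi2 A C))) =
      comp f (pair (dagger (comp g (pair f (pi2 B C)))) (idm C))
}.

Arguments dagger {c A C}.

(* Finite automata: states 'I_n.+1 (= q_1..q_{n+1}), inputs 'I_m.+1,    *)
Section Gamma.
Variables (X : ConwayCat) (n m : nat) (delta : 'I_n.+1 -> 'I_m.+1 -> 'I_n.+1).

Definition rho (A : ob X) (i : nat) : hom (powS A n) (powS A m) :=
  tupS m (fun j => projS A n (delta (inord i) (inord j))).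

Definition fQ (A C : ob X) (f : hom (prod (powS A m) C) A) :
    hom (prod (powS A n) C) (powS A n) :=
  tupS n (fun i => comp f (pmap (rho A i) (idm C))).

Definition Gamma (q : 'I_n.+1) : Prop :=
  forall (A C : ob X) (f : hom (prod (powS A m) C) A),
    comp (projS A n q) (dagger (fQ f)) =
    dagger (comp f (pmap (diagS A m) (idm C))).

End Gamma.

(* Main.v *)
Require Import Defs.
From mathcomp Require Import all_boot.

Notation cmp := Defs.comp.
Notation pm := Defs.pmap.
Arguments comp_assoc {c A B C D}.
Arguments comp_idl {c A B}.
Arguments comp_idr {c A B}.
Arguments pi1_pair {c C A B}.
Arguments pi2_pair {c C A B}.
Arguments pair_eta {c C A B}.

Section Gen.
Variable X : CartCat.

Lemma pair_ext (Cc A B : ob X) (u v : hom Cc (prod A B)) :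
  cmp (pi1 A B) u = cmp (pi1 A B) v -> cmp (pi2 A B) u = cmp (pi2 A B) v -> u = v.
Proof. by move=> h1 h2; rewrite -(pair_eta u) -(pair_eta v) h1 h2. Qed.

Lemma comp_pair (D Cc A B : ob X) (f : hom Cc A) (g : hom Cc B) (h : hom D Cc) :
  cmp (pair f g) h = pair (cmp f h) (cmp g h).
Proof.
by apply: pair_ext; rewrite comp_assoc ?pi1_pair ?pi2_pair.
Qed.

Lemma pmap_pair (D A B A' B' : ob X) (f : hom A A') (g : hom B B') (h : hom D A) (k : hom D B) :
  cmp (pm f g) (pair h k) = pair (cmp f h) (cmp g k).
Proof.
by rewrite /pm comp_pair -!comp_assoc pi1_pair pi2_pair.
Qed.

Lemma pmap_comp (A B A' B' A'' B'' : ob X) (f : hom A' A'') (g : hom B' B'')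
  (f' : hom A A') (g' : hom B B') :
  cmp (pm f g) (pm f' g') = pm (cmp f f') (cmp g g').
Proof. by rewrite {2}/pm pmap_pair /pm !comp_assoc. Qed.

Lemma tupS_comp (D Cc A : ob X) k (fs : nat -> hom Cc A) (h : hom D Cc) :
  cmp (tupS k fs) h = tupS k (fun j => cmp (fs j) h).
Proof.
elim: k fs => [|k IH] fs //=.
by rewrite comp_pair IH.
Qed.

Lemma projS_tupS (Cc A : ob X) k j (fs : nat -> hom Cc A) :
  j <= k -> cmp (projS A k j) (tupS k fs) = fs j.
Proof.
elim: k j fs => [|k IH] [|j] fs //= hj.
- by rewrite comp_idl.
- by rewrite pi1_pair.
- by rewrite -comp_assoc pi2_pair IH.
Qed.

Lemma tupS_ext (Cc A : ob X) k (fs gs : nat -> hom Cc A) :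
  (forall j, j <= k -> fs j = gs j) -> tupS k fs = tupS k gs.
Proof.
elim: k fs gs => [|k IH] fs gs h /=; first exact: h.
by rewrite (h 0) // (IH (fun j => fs j.+1) (fun j => gs j.+1)) // => j hj; apply: h.
Qed.

End Gen.

Theorem lemma4p3 (X : ConwayCat) (n m : nat)
    (delta : 'I_n.+1 -> 'I_m.+1 -> 'I_n.+1) (q : 'I_n.+1) (a : 'I_m.+1) :
  Gamma X delta q -> Gamma X delta (delta q a).
Proof.
move=> HG A Cc f.
set P1 := fun k => tupS k (fun j => cmp (pi1 A A) (projS (prod A A) k j)).
pose F : hom (prod (powS (prod A A) m) Cc) (prod A A) :=
  pair (cmp f (pm (P1 m) (idm Cc))) (cmp (cmp (pi1 A A) (projS (prod A A) m a)) (pi1 _ Cc)).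
pose Gi := fun i => (pair (cmp f (pm (rho delta A i) (idm Cc)))
                          (cmp (projS A n (delta (inord i) a)) (pi1 _ Cc))
                     : hom (prod (powS A n) Cc) (prod A A)).
pose G := tupS n Gi.
have P1proj : forall k j, j <= k -> cmp (projS A k j) (P1 k) = cmp (pi1 A A) (projS (prod A A) k j).
  by move=> k j hj; rewrite /P1 projS_tupS.
have Hrho : forall i, cmp (P1 m) (rho delta (prod A A) i) = cmp (rho delta A i) (P1 n).
  move=> i; rewrite /rho /P1 !tupS_comp; apply: tupS_ext => j hj.
  by rewrite -!comp_assoc !projS_tupS // -ltnS ltn_ord.
have HFQ : fQ delta F = cmp G (pair (cmp (P1 n) (pi1 _ Cc)) (pi2 _ Cc)).
  rewrite /fQ /G tupS_comp; apply: tupS_ext => i hi.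
  apply: pair_ext.
    rewrite /F /Gi !comp_assoc !pi1_pair -!comp_assoc !pmap_comp pmap_pair Hrho /pm !comp_idl !comp_assoc.
    done.
  rewrite /F /Gi !comp_assoc !pi2_pair -!comp_assoc /pm !pi1_pair !comp_assoc P1proj; last by rewrite -ltnS ltn_ord.
  by rewrite -(comp_assoc (pi1 A A)) /rho projS_tupS ?inord_val // -ltnS ltn_ord.
have HPG : cmp (P1 n) G = fQ delta f.
  rewrite /P1 tupS_comp /fQ; apply: tupS_ext => j hj.
  by rewrite -comp_assoc projS_tupS // /Gi pi1_pair.
have Hd : dagger (fQ delta F) = cmp G (pair (dagger (fQ delta f)) (idm Cc)).
  by rewrite HFQ conway_comp -comp_assoc pi1_pair HPG.
pose G' := (pair (cmp f (pm (diagS A m) (idm Cc))) (pi1 A Cc) : hom (prod A Cc) (prod A A)).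
have HD : cmp (P1 m) (diagS (prod A A) m) = cmp (diagS A m) (pi1 A A).
  rewrite /diagS /P1 !tupS_comp; apply: tupS_ext => j hj.
  by rewrite -comp_assoc projS_tupS // comp_idr comp_idl.
have HFD : cmp F (pm (diagS (prod A A) m) (idm Cc)) =
           cmp G' (pair (cmp (pi1 A A) (pi1 _ Cc)) (pi2 _ Cc)).
  apply: pair_ext.
    rewrite /F /G' !comp_assoc !pi1_pair -!comp_assoc pmap_comp pmap_pair HD /pm.
    by rewrite !comp_idl !comp_assoc.
  rewrite /F /G' !comp_assoc !pi2_pair pi1_pair -!comp_assoc /pm pi1_pair.
  by rewrite [cmp (projS _ _ _) _]comp_assoc; rewrite /diagS projS_tupS ?comp_idl // -ltnS ltn_ord.
have Hd2 : dagger (cmp F (pm (diagS (prod A A) m) (idm Cc))) =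
           cmp G' (pair (dagger (cmp f (pm (diagS A m) (idm Cc)))) (idm Cc)).
  rewrite HFD conway_comp -comp_assoc pi1_pair.
  by have -> : cmp (pi1 A A) G' = cmp f (pm (diagS A m) (idm Cc)) by rewrite pi1_pair.
have := HG (prod A A) Cc F.
rewrite Hd Hd2 => /(f_equal (cmp (pi2 A A))).
move=> H.
have E1 : cmp (pi2 A A) (cmp G' (pair (dagger (cmp f (pm (diagS A m) (idm Cc)))) (idm Cc)))
          = dagger (cmp f (pm (diagS A m) (idm Cc))).
  by rewrite comp_assoc /G' pi2_pair pi1_pair.
rewrite E1 in H; rewrite -H.
rewrite (comp_assoc (projS _ _ _)) /G projS_tupS; last by rewrite -ltnS ltn_ord.
by rewrite comp_assoc /Gi inord_val pi2_pair -comp_assoc pi1_pair.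
Qed.
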